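(* For every bracket pattern $w$: $w\subseteq A(w)$, $\min(A(w))=1$, and $\max(A(w))=\|w\|$. In particular $A(w)\subseteq A(A(w))$.
   Context: $\mathbb N=\{1,2,\dots\}$, $\mathbb N_0=\mathbb N\cup\{0\}$. A bracket pattern is a non-empty finite subset $w\subseteq\mathbb N$; $\|w\|:=\max(w)$. The completion of a bracket pattern $w$ is $A(w):=\{j-i\mid j\in w,\ i\in\mathbb N_0,\ i\notin w,\ i<j\}$. *)

(* Defs.v *)
From HB Require Import structures.
From mathcomp Require Import all_boot all_order.
From mathcomp Require Import finmap.
Set Implicit Arguments. Unset Strict Implicit. Unset Printing Implicit Defensive.
Local Open Scope fset_scope.

Definition bracket_pattern (w : {fset nat}) : Prop :=
  w != fset0 /\ (0 \notin w).

Definition bnorm (w : {fset nat}) : nat := \max_(j <- w) j.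

Definition completion (w : {fset nat}) : {fset nat} :=
  [fset (j - i)%N | j in w, i in [fset i in iota 0 (bnorm w) | i \notin w]
                   & (i < j)%N].

(* Main.v *)
Require Import Defs.
From HB Require Import structures.
From mathcomp Require Import all_boot all_order finmap.
Local Open Scope fset_scope.

Lemma memA (w : {fset nat}) a : reflect
  (exists j i, [/\ j \in w, (i < bnorm w)%N, i \notin w, (i < j)%N & a = (j - i)%N])
  (a \in completion w).
Proof.
rewrite /completion; apply: (iffP (imfset2P _ _ _ _ _)).
- move=> [j jw [i]]; rewrite !inE /= mem_iota add0n => /andP[/andP[H1 H2] H3] ->.
  by exists j, i.
- move=> [j [i [jw ib iw ij ->]]]; exists j => //; exists i => //.
  by rewrite !inE /= mem_iota add0n ib iw ij.
Qed.

Lemma le_bnorm (w : {fset nat}) j : j \in w -> (j <= bnorm w)%N.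
Proof. move=> jw; rewrite /bnorm; exact: (@leq_bigmax_seq _ (w : seq nat) predT (fun j => j) j). Qed.

Arguments le_bnorm {w j}.
Lemma bnorm_in (w : {fset nat}) : bnorm w = 0%N \/ bnorm w \in w.
Proof.
rewrite /bnorm big_seq_cond; apply: (big_ind (fun x => x = 0%N \/ x \in w)); first by left.
- by move=> x y Hx Hy; unfold maxn; case: (x < y)%N.
- by move=> j /andP[jw _]; right.
Qed.

Lemma part1 (w : {fset nat}) : bracket_pattern w ->
  [/\ w `<=` completion w,
      (1 \in completion w /\ forall a, a \in completion w -> (1 <= a)%N)
    & (bnorm w \in completion w /\
         forall a, a \in completion w -> (a <= bnorm w)%N)].
Proof.
move=> [wn w0].
have pos : forall j, j \in w -> (0 < j)%N.
  by move=> [|j] //; rewrite (negbTE w0).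
have inw : forall j, j \in w -> j \in completion w.
  move=> j jw; apply/memA; exists j, 0%N; split.
  - exact: jw.
  - exact: leq_trans (pos _ jw) (le_bnorm jw).
  - exact: w0.
  - exact: pos.
  - by rewrite subn0.
have [j0 j0w] : exists j, j \in w.
  case: (fset_0Vmem w) => [e|[x xw]]; last by exists x.
  by rewrite e eqxx in wn.
have bw : bnorm w \in w.
  case: (bnorm_in w) => // b0.
  by have := leq_trans (pos _ j0w) (le_bnorm j0w); rewrite b0.
split.
- by apply/fsubsetP => j; apply: inw.
- split; last by move=> a /memA [j [i [_ _ _ ij ->]]]; rewrite subn_gt0.
  have ex : exists n, n \in w by exists j0.
  pose m := ex_minn ex.
  have mw : m \in w by rewrite /m; case: ex_minnP.
  have mmin : forall n, n \in w -> (m <= n)%N by rewrite /m; case: ex_minnP.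
  apply/memA; exists m, m.-1; split => //.
  + by rewrite prednK ?(pos _ mw) // (le_bnorm mw).
  + apply/negP => H; have := mmin _ H; have := pos _ mw; case: (m) => //= n _.
    by rewrite ltnn.
  + by have := pos _ mw; case: (m).
  + by have := pos _ mw; case: (m) => // n _; rewrite subSn // subnn.
- split; first exact: inw.
  move=> a /memA [j [i [jw _ _ _ ->]]].
  exact: leq_trans (leq_subr _ _) (le_bnorm jw).
Qed.

Theorem lemma7p4 (w : {fset nat}) :
  bracket_pattern w ->
  [/\ w `<=` completion w,
      (1 \in completion w /\ forall a, a \in completion w -> (1 <= a)%N),
      (bnorm w \in completion w /\
         forall a, a \in completion w -> (a <= bnorm w)%N)
    & completion w `<=` completion (completion w)].
Proof.
move=> bw; have [H1 [H2 H3] H4] := part1 _ bw.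
split => //.
have bA : bracket_pattern (completion w).
  split.
  - by apply/eqP => e; move: H2; rewrite e inE.
  - by apply/negP => /H3.
by have [] := part1 _ bA.
Qed.
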